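(* Let $\alpha=(\alpha_1,\ldots,\alpha_n)$ be a composition, $\sigma\in S_n$, and $i\in\{1,\ldots,n-1\}$ with $\alpha_i=\alpha_{i+1}$. Let $T\in\mathrm{NAF}(\alpha,\sigma)$ and let $U=\Omega_{0,h}(T)$ for some $h\in\{0,\ldots,\alpha_i\}$, and suppose $U$ is non-attacking. Then for all $r\in\{0,\ldots,h-1\}$, $$\mathrm{wt}_{r}(U)\,\rho_r(U)=\mathrm{wt}_{r}(T)\,\rho_r(T).$$
   Context: Permutations are in one-line notation; $\sigma s_i$ is $\sigma$ with the entries in positions $i,i+1$ exchanged. A composition is a sequence of nonnegative integers. The skyline diagram is $\mathrm{dg}(\alpha)=\{(j,r):1\le j\le n,\ 1\le r\le\alpha_j\}$ ($j$ = column, $r$ = row) and the augmented diagram is $\mathrm{adg}(\alpha)=\mathrm{dg}(\alpha)\cup\{(j,0):1\le j\le n\}$ (row $0$ is the basement). For $u=(j,r)\in\mathrm{dg}(\alpha)$: $\mathrm{south}(u)=(j,r-1)$; $\mathrm{leg}(u)=\alpha_j-r$; the left arm set is $\{(j',r-1)\in\mathrm{adg}(\alpha):j'<j,\ \alpha_{j'}<\alpha_j\}$, the right arm set is $\{(j',r)\in\mathrm{dg}(\alpha):j'>j,\ \alpha_{j'}\le\alpha_j\}$, $\mathrm{Arm}(u)$ is their union and $\mathrm{arm}(u)=|\mathrm{Arm}(u)|$. Two boxes of $\mathrm{adg}(\alpha)$ attack each other if they are in the same row, or in consecutive rows with the box in the higher row strictly to the right of the box in the lower row. A filling of shape $\alpha$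 and basement $\tau\in S_n$ is a map $T:\mathrm{adg}(\alpha)\to\{1,\ldots,n\}$ with $T(j,0)=\tau_j$; $\mathrm{NAF}(\alpha,\tau)$ is the set of non-attacking ones (attacking boxes have distinct entries). For integers $a,b$ let $\chi(a,b)=1$ if $a>b$ and $0$ otherwise, and $\chi(a,b,c)=\chi(a,b)+\chi(b,c)-\chi(a,c)$. For a non-attacking filling $T$: a descent is $u\in\mathrm{dg}(\alpha)$ with $T(u)>T(\mathrm{south}(u))$; a triple is $(u,v,w)$ with $u\in\mathrm{dg}(\alpha)$, $w=\mathrm{south}(u)$, $v\in\mathrm{Arm}(u)$, an inversion triple if $\chi(T(u),T(v),T(w))=1$ and a coinversion triple otherwise. For $r\ge0$, let $\mathrm{maj}_{r+1}(T)=\sum(\mathrm{leg}(u)+1)$ over descents $u$ in row $r+1$, let $\mathrm{coinv}_{r,r+1}(T)$ be the number of coinversion triples $(u,v,w)$ with $u$ in row $r+1$, and $\mathrm{wt}_r(T)=q^{\mathrm{maj}_{r+1}(T)}t^{\mathrm{coinv}_{r,r+1}(T)}\prod_{u\in\mathrm{dg}(\alpha)\text{ in row }r+1,\ T(u)\ne T(\mathrm{south}(u))}\frac{1-t}{1-q^{1+\mathrm{leg}(u)}t^{1+\mathrm{arm}(u)}}$ (empty sums are $0$, empty products $1$). Fix $i$ with $\alpha_i=\alpha_{i+1}$. For a filling $T$ and $0\le r\le\alpha_i$, $\mathrm{swap}_r(T)$ exchanges the entries of boxes $(i,r)$ and $(i+1,r)$, and $\Omega_{0,h}=\mathrm{swap}_h\circ\cdots\circ\mathrm{swap}_0$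 (so $\Omega_{0,h}(T)$ has basement $\sigma s_i$). For a non-attacking filling $T$ (any basement) and $0\le r\le\alpha_i-1$, let $a=T(i,r)$, $b=T(i+1,r)$, $c=T(i,r+1)$, $d=T(i+1,r+1)$, $A=\mathrm{arm}(i+1,r+1)$, $\ell=\mathrm{leg}(i+1,r+1)$, and define $\rho_r(T)\in\mathbb{Q}(q,t)$: if $a,b,c,d$ are distinct, $\rho_r(T)=0$ when $\chi(c,d,a)=\chi(c,d,b)$ and $\rho_r(T)=1$ when $\chi(c,d,a)=\chi(d,c,b)$; if exactly three of them are distinct, then $\rho_r(T)=0$ if $b=c$, $\rho_r(T)=1$ if $b=d$, and $\rho_r(T)=t^{1-\chi(d,a,b)}\frac{1-q^{\ell+1}t^{A+1}}{1-q^{\ell+1}t^{A+2}}$ if $a=c$; if $a=c$ and $b=d$, $\rho_r(T)=1$. *)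

(* Defs.v *)
From mathcomp Require Import all_boot all_order all_algebra.
Set Implicit Arguments. Unset Strict Implicit. Unset Printing Implicit Defensive.
Import Order.TTheory GRing.Theory Num.Theory.

(* Conventions: columns are 1-indexed natural numbers j (1 <= j <= n),
   rows are natural numbers r (row 0 = basement).  A composition is a
   [seq nat] alpha with n = size alpha and alpha_j = nth 0 alpha j.-1.
   A permutation sigma of S_n in one-line notation is a [seq nat] that is a
   permutation of [1; ...; n].  A filling is a total function
   T : nat -> nat -> nat, T j r being the entry of box (j, r); only its values
   on adg(alpha) matter. *)

Definition Rqt := {poly {poly rat}}.
Definition Kqt := {fraction Rqt}.
Definition qv : Kqt := FracField.tofrac ((('X : {poly rat})%:P) : Rqt).
Definition tv : Kqt := FracField.tofrac ('X : Rqt).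

Section Skyline.
Variable alpha : seq nat.

Definition nn := size alpha.
Definition al (j : nat) : nat := nth 0 alpha j.-1.

Definition in_dg (j r : nat) : bool := [&& 1 <= j, j <= nn, 1 <= r & r <= al j].
Definition in_adg (j r : nat) : bool := [&& 1 <= j, j <= nn & r <= al j].

Definition leg (j r : nat) : nat := al j - r.

Definition left_arm (j r : nat) : seq (nat * nat) :=
  [seq (j', r.-1) | j' <- iota 1 (j - 1) & in_adg j' r.-1 && (al j' < al j)].
Definition right_arm (j r : nat) : seq (nat * nat) :=
  [seq (j', r) | j' <- iota j.+1 (nn - j) & in_dg j' r && (al j' <= al j)].
Definition Arm (j r : nat) : seq (nat * nat) := left_arm j r ++ right_arm j r.
Definition arm (j r : nat) : nat := size (Arm j r).

Definition attack (j1 r1 j2 r2 : nat) : bool :=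
  [|| (r1 == r2) && (j1 != j2),
      (r2 == r1.+1) && (j1 < j2)
    | (r1 == r2.+1) && (j2 < j1)].

Definition non_attacking (T : nat -> nat -> nat) : Prop :=
  forall j1 r1 j2 r2, in_adg j1 r1 -> in_adg j2 r2 ->
    attack j1 r1 j2 r2 -> T j1 r1 <> T j2 r2.

Definition is_filling (tau : seq nat) (T : nat -> nat -> nat) : Prop :=
  (forall j r, in_adg j r -> 1 <= T j r <= nn) /\
  (forall j, 1 <= j <= nn -> T j 0 = nth 0 tau j.-1).

Definition NAF (tau : seq nat) (T : nat -> nat -> nat) : Prop :=
  is_filling tau T /\ non_attacking T.

Definition chi (a b : nat) : int := (a > b)%N%:Z.
Definition chi3 (a b c : nat) : int := (chi a b + chi b c - chi a c)%R.

Local Open Scope ring_scope.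

Definition maj1 (T : nat -> nat -> nat) (r : nat) : nat :=
  (\sum_(j <- iota 1 nn | in_dg j r.+1 && (T j r.+1 > T j r)%N) (leg j r.+1).+1)%N.

Definition coinv1 (T : nat -> nat -> nat) (r : nat) : nat :=
  (\sum_(j <- iota 1 nn | in_dg j r.+1)
     count (fun v : nat * nat => chi3 (T j r.+1) (T v.1 v.2) (T j r) != 1%R)
           (Arm j r.+1))%N.

Definition wt (T : nat -> nat -> nat) (r : nat) : Kqt :=
  qv ^+ maj1 T r * tv ^+ coinv1 T r *
  \prod_(j <- iota 1 nn | in_dg j r.+1 && (T j r.+1 != T j r))
     ((1 - tv) / (1 - qv ^+ (1 + leg j r.+1)%N * tv ^+ (1 + arm j r.+1)%N)).

Definition swap_row (i r : nat) (T : nat -> nat -> nat) : nat -> nat -> nat :=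
  fun j r' => if r' == r then
                (if j == i then T i.+1 r' else if j == i.+1 then T i r' else T j r')
              else T j r'.

Fixpoint Omega (i h : nat) (T : nat -> nat -> nat) : nat -> nat -> nat :=
  match h with
  | 0 => swap_row i 0 T
  | h'.+1 => swap_row i h'.+1 (Omega i h' T)
  end.

Definition rho (i : nat) (T : nat -> nat -> nat) (r : nat) : Kqt :=
  let a := T i r in let b := T i.+1 r in
  let c := T i r.+1 in let d := T i.+1 r.+1 in
  let A := arm i.+1 r.+1 in let l := leg i.+1 r.+1 in
  if size (undup [:: a; b; c; d]) == 4%N then
    (if chi3 c d a == chi3 c d b then 0
     else if chi3 c d a == chi3 d c b then 1 else 0)
  else if size (undup [:: a; b; c; d]) == 3%N then
    (if b == c then 0
     else if b == d then 1
     else if a == c then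
       tv ^ (1 - chi3 d a b) *
       ((1 - qv ^+ l.+1 * tv ^+ A.+1) / (1 - qv ^+ l.+1 * tv ^+ A.+2))
     else 0)
  else if (a == c) && (b == d) then 1
  else 0.

End Skyline.

Definition perm_si (sigma : seq nat) (i : nat) : seq nat :=
  [seq (if k == i then nth 0 sigma i else if k == i.+1 then nth 0 sigma i.-1
        else nth 0 sigma k.-1) | k <- iota 1 (size sigma)].

(* Main.v *)
Require Import Defs.
From mathcomp Require Import all_boot all_order all_algebra ring zify.
Import Order.TTheory GRing.Theory Num.Theory.

Local Open Scope ring_scope.

Lemma X_neq0 (k m : nat) : 1 - qv ^+ k * tv ^+ m.+1 != 0.
Proof.
rewrite /qv /tv -!tofracXn -tofracM -tofrac1 -tofracB tofrac_eq0.
apply/eqP => /(congr1 (fun p : Rqt => p.[0])).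
rewrite !hornerE /= expr0n /= mulr0 subr0 => /eqP; rewrite oner_eq0 //.
Qed.

Lemma chi3_01 x y z : chi3 x y z = 0 \/ chi3 x y z = 1.
Proof.
rewrite /chi3 /chi.
case: (ltngtP x y); case: (ltngtP y z); case: (ltngtP x z) => //= *; try lia; auto.
Qed.

Lemma chi3_sym c d z : c <> d -> chi3 d c z = 1 - chi3 c d z.
Proof.
move=> H; rewrite /chi3 /chi.
case: (ltngtP c d); case: (ltngtP d z); case: (ltngtP c z) => //= *; try lia; auto.
Qed.

Lemma chi3_xyx x y : x <> y -> chi3 x y x = 1.
Proof.
move=> H; rewrite /chi3 /chi ltnn /=.
case: (ltngtP x y) => //= *; lia.
Qed.

Definition rhoE {F : fieldType} (tv qv : F) (a b c d A l : nat) : F :=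
  if size (undup [:: a; b; c; d]) == 4%N then
    (if chi3 c d a == chi3 c d b then 0
     else if chi3 c d a == chi3 d c b then 1 else 0)
  else if size (undup [:: a; b; c; d]) == 3%N then
    (if b == c then 0
     else if b == d then 1
     else if a == c then
       tv ^ (1 - chi3 d a b) *
       ((1 - qv ^+ l.+1 * tv ^+ A.+1) / (1 - qv ^+ l.+1 * tv ^+ A.+2))
     else 0)
  else if (a == c) && (b == d) then 1
  else 0.

Lemma rhoE_rho alpha i X r : rho alpha i X r =
  rhoE tv qv (X i r) (X i.+1 r) (X i r.+1) (X i.+1 r.+1) (arm alpha i.+1 r.+1) (leg alpha i.+1 r.+1).
Proof. by []. Qed.

Lemma key (F : fieldType) (tv qv : F) (a b c d A l : nat) :
 (forall k m, 1 - qv ^+ k * tv ^+ m.+1 != 0) ->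
 a != b -> c != d -> a != d -> b != c ->
 let F1 := (1 - tv) / (1 - qv ^+ (1 + l) * tv ^+ (1 + A.+1)) in
 let F2 := (1 - tv) / (1 - qv ^+ (1 + l) * tv ^+ (1 + A)) in
 tv ^+ (chi3 d c b != 1) * ((if d != b then F1 else 1) * (if c != a then F2 else 1)) * rhoE tv qv b a d c A l
 = tv ^+ (chi3 c d a != 1) * ((if c != a then F1 else 1) * (if d != b then F2 else 1)) * rhoE tv qv a b c d A l.
Proof.
move=> Xn ab cd ad bc F1 F2.
have ba : b != a by rewrite eq_sym.
have dc : d != c by rewrite eq_sym.
have da : d != a by rewrite eq_sym.
have cb : c != b by rewrite eq_sym.
have cd' : c <> d by apply/eqP.
have X1 := Xn l.+1 A. have X2 := Xn l.+1 A.+1.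
have h01 : ((0:int) != 1) = true by [].
rewrite /rhoE /F1 /F2 !add1n.
case: (eqVneq a c) => [ac|ac]; case: (eqVneq b d) => [bd|bd].
{ subst c d; rewrite /= !inE !eqxx (negbTE ab) (negbTE ba) /= !chi3_xyx //; by apply/eqP. }
{ subst c.
  do 3 rewrite /= ?inE ?eqxx ?(negbTE ab) ?(negbTE ba) ?(negbTE ad) ?(negbTE da) ?(negbTE bd) ?(negbTE dc) ?(negbTE cd) ?(negbTE cb) ?(negbTE bc) ?(negbTE ab) /=.
  have db : d != b by rewrite eq_sym.
  rewrite ?(negbTE db) /=.
  have ad' : a <> d by apply/eqP.
  rewrite chi3_xyx //.
  case: (chi3_01 d a b) => ->; rewrite ?h01 ?eqxx ?subr0 ?subrr ?expr1z ?expr0z ?expr1 ?expr0;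
  by field; rewrite X1 X2. }
{ subst d.
  do 3 rewrite /= ?inE ?eqxx ?(negbTE ab) ?(negbTE ba) ?(negbTE ad) ?(negbTE da) ?(negbTE ac) ?(negbTE dc) ?(negbTE cd) ?(negbTE cb) ?(negbTE bc) /=.
  have ca : c != a by rewrite eq_sym.
  rewrite ?(negbTE ca) /=.
  have cb' : b <> c by apply/eqP.
  rewrite chi3_xyx //.
  case: (chi3_01 c b a) => ->; rewrite ?h01 ?eqxx ?subr0 ?subrr ?expr1z ?expr0z ?expr1 ?expr0;
  by field; rewrite X1 X2. }
have ca : c != a by rewrite eq_sym.
have db : d != b by rewrite eq_sym.
do 3 rewrite /= ?inE ?(negbTE ab) ?(negbTE ba) ?(negbTE ad) ?(negbTE da) ?(negbTE bd) ?(negbTE ac)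
    ?(negbTE cd) ?(negbTE dc) ?(negbTE bc) ?(negbTE cb) ?(negbTE ca) ?(negbTE db) /=.
rewrite (chi3_sym _ _ b cd') (chi3_sym _ _ a cd').
have h10 : ((0:int) == 1) = false by [].
have h10' : ((1:int) == 0) = false by [].
case: (chi3_01 c d a) => ->; case: (chi3_01 c d b) => ->;
  rewrite ?subr0 ?subrr ?eqxx ?h01 ?h10 ?h10' ?expr1 ?expr0; ring.
Qed.

Lemma rearr (R : comRingType) (x y p mU mT rU rT eU eT : R) :
  eU * mU * rU = eT * mT * rT -> x * (y * eU) * (p * mU) * rU = x * (y * eT) * (p * mT) * rT.
Proof.
move=> H.
have -> : x * (y * eU) * (p * mU) * rU = x * y * p * (eU * mU * rU) by ring.
rewrite H; ring.
Qed.

Local Close Scope ring_scope.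

Section S.
Variable alpha : seq nat.
Variable i : nat.
Hypothesis Hi1 : 1 <= i.
Hypothesis Hin : i.+1 <= nn alpha.
Hypothesis Hal : al alpha i = al alpha i.+1.

Definition sw j := if j == i then i.+1 else if j == i.+1 then i else j.

Lemma Omega_eq T h j x : Omega i h T j x = if x <= h then T (sw j) x else T j x.
Proof.
elim: h j x => [|h IH] j x /=; rewrite /swap_row /sw.
  by case: x => [|x] //=; do 2 case: ifP => //.
case: (x =P h.+1) => [->|/eqP xh].
  rewrite !IH ltnn leqnn /sw; repeat (case: ifP => //); lia.
rewrite IH; have -> : (x <= h.+1) = (x <= h) by lia.
done.
Qed.

Lemma sw_inv j : sw (sw j) = j.
Proof. rewrite /sw; repeat (case: ifP => //); lia. Qed.

Lemma sw_inj : injective sw.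
Proof. exact: can_inj sw_inv. Qed.

Lemma sw_al j : al alpha (sw j) = al alpha j.
Proof. rewrite /sw; case: ifP => [/eqP->|] //; case: ifP => [/eqP->|] //. Qed.

Lemma sw_rng j : (1 <= sw j <= nn alpha) = (1 <= j <= nn alpha).
Proof. rewrite /sw; repeat (case: ifP => //); lia. Qed.

Lemma sw_in_dg j x : in_dg alpha (sw j) x = in_dg alpha j x.
Proof.
rewrite /in_dg sw_al; have := sw_rng j.
case: (1 <= sw j); case: (sw j <= nn alpha); case: (1 <= j); case: (j <= nn alpha) => //.
Qed.

Lemma sw_in_adg j x : in_adg alpha (sw j) x = in_adg alpha j x.
Proof.
rewrite /in_adg sw_al; have := sw_rng j.
case: (1 <= sw j); case: (sw j <= nn alpha); case: (1 <= j); case: (j <= nn alpha) => //.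
Qed.

Lemma sw_iota a n : (i \in iota a n) = (i.+1 \in iota a n) ->
  perm_eq (map sw (iota a n)) (iota a n).
Proof.
move=> H; apply: uniq_perm; first by rewrite (map_inj_uniq sw_inj) iota_uniq.
  exact: iota_uniq.
move=> x; rewrite -{1}(sw_inv x) (mem_map sw_inj).
move: H; rewrite !mem_iota /sw; repeat (case: ifP => //); lia.
Qed.

Definition swv (v : nat * nat) := (sw v.1, v.2).

Lemma perm_row s (P : pred nat) x : (forall j', P (sw j') = P j') ->
  perm_eq (map sw s) s ->
  perm_eq (map swv (map (fun j' => (j', x)) (filter P s))) (map (fun j' => (j', x)) (filter P s)).
Proof.
move=> HP Hs; rewrite -map_comp.
have -> : map (swv \o (fun j' => (j', x))) (filter P s) = map (fun j' => (j', x)) (map sw (filter P s)).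
  by rewrite -map_comp.
apply: perm_map.
have -> : map sw (filter P s) = filter P (map sw s).
  by rewrite filter_map; congr map; apply: eq_filter => y; rewrite /= HP.
exact: perm_filter.
Qed.

Lemma arm_perm j r : j != i -> j != i.+1 -> perm_eq (map swv (Arm alpha j r)) (Arm alpha j r).
Proof.
move=> H1 H2; rewrite /Arm map_cat; apply: perm_cat.
  apply: perm_row; first by move=> y; rewrite /= sw_in_adg sw_al.
  apply: sw_iota; rewrite !mem_iota; lia.
apply: perm_row; first by move=> y; rewrite /= sw_in_dg sw_al.
apply: sw_iota; rewrite !mem_iota; lia.
Qed.

Lemma left_mem j r v : v \in left_arm alpha j r -> v.2 = r.-1 /\ v.1 < j.
Proof. rewrite /left_arm => /mapP [y]; rewrite mem_filter mem_iota => /andP [_ Hy] -> /=; lia. Qed.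

Lemma right_mem j r v : v \in right_arm alpha j r -> v.2 = r /\ j < v.1.
Proof. rewrite /right_arm => /mapP [y]; rewrite mem_filter mem_iota => /andP [_ Hy] -> /=; lia. Qed.

Lemma arm_mem j r v : v \in Arm alpha j r -> v.2 <= r /\ v.1 != j.
Proof. rewrite mem_cat => /orP [/left_mem|/right_mem]; lia. Qed.

Lemma left_arm_i r : left_arm alpha i r = left_arm alpha i.+1 r.
Proof.
rewrite /left_arm; have -> : i.+1 - 1 = (i - 1) + 1 by lia.
rewrite iotaD filter_cat /=.
have -> : 1 + (i - 1) = i by lia.
by rewrite -Hal ltnn andbF cats0.
Qed.

Lemma right_arm_i r : in_dg alpha i.+1 r ->
  right_arm alpha i r = (i.+1, r) :: right_arm alpha i.+1 r.
Proof.
move=> Hd; rewrite /right_arm.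
have -> : nn alpha - i = (nn alpha - i.+1).+1 by lia.
by rewrite /= Hd Hal leqnn /=.
Qed.

Lemma Arm_i r : in_dg alpha i.+1 r ->
  Arm alpha i r = left_arm alpha i r ++ (i.+1, r) :: right_arm alpha i.+1 r.
Proof. by move=> Hd; rewrite /Arm right_arm_i. Qed.

Lemma Arm_i1 r : Arm alpha i.+1 r = left_arm alpha i r ++ right_arm alpha i.+1 r.
Proof. by rewrite /Arm left_arm_i. Qed.

Lemma arm_i r : in_dg alpha i.+1 r -> arm alpha i r = (arm alpha i.+1 r).+1.
Proof. by move=> Hd; rewrite /arm Arm_i // Arm_i1 !size_cat /= addnS. Qed.

Lemma iota_split : iota 1 (nn alpha) = iota 1 i.-1 ++ i :: i.+1 :: iota i.+2 (nn alpha - i.+1).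
Proof.
have -> : nn alpha = i.-1 + (nn alpha - i.+1).+2 by lia.
rewrite iotaD; congr (_ ++ _); have -> : 1 + i.-1 = i by lia.
by rewrite /=; congr (_ :: _ :: iota _ _); lia.
Qed.

Lemma big_split3 (R : Type) (idx : R) (op : Monoid.com_law idx) (F G : nat -> R) :
  (forall j, j \in iota 1 (nn alpha) -> j != i -> j != i.+1 -> F j = G j) ->
  exists P, \big[op/idx]_(j <- iota 1 (nn alpha)) F j = op P (op (F i) (F i.+1)) /\
            \big[op/idx]_(j <- iota 1 (nn alpha)) G j = op P (op (G i) (G i.+1)).
Proof.
move=> H; rewrite iota_split !big_cat !big_cons.
exists (op (\big[op/idx]_(j <- iota 1 i.-1) F j) (\big[op/idx]_(j <- iota i.+2 (nn alpha - i.+1)) F j)).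
have E1 : \big[op/idx]_(j <- iota 1 i.-1) F j = \big[op/idx]_(j <- iota 1 i.-1) G j.
  apply: eq_big_seq => j; rewrite mem_iota => Hj; apply: H; rewrite ?mem_iota; lia.
have E2 : \big[op/idx]_(j <- iota i.+2 (nn alpha - i.+1)) F j = \big[op/idx]_(j <- iota i.+2 (nn alpha - i.+1)) G j.
  apply: eq_big_seq => j; rewrite mem_iota => Hj; apply: H; rewrite ?mem_iota; lia.
rewrite -E1 -E2; split; rewrite -!Monoid.mulmA; congr (op _ _);
  by rewrite [RHS]Monoid.mulmC -Monoid.mulmA.
Qed.


Variable T : nat -> nat -> nat.
Variable h r : nat.
Hypothesis Hh : h <= al alpha i.
Hypothesis Hr : r < h.
Let U := Omega i h T.

Lemma U_out j x : j != i -> j != i.+1 -> U j x = T j x.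
Proof. by move=> H1 H2; rewrite /U Omega_eq /sw (negbTE H1) (negbTE H2); case: ifP. Qed.

Lemma U_i x : x <= h -> U i x = T i.+1 x.
Proof. by move=> Hx; rewrite /U Omega_eq Hx /sw eqxx. Qed.

Lemma U_i1 x : x <= h -> U i.+1 x = T i x.
Proof. by move=> Hx; rewrite /U Omega_eq Hx /sw eqxx; case: ifP => //; lia. Qed.

Lemma U_sw v : v.2 <= r.+1 -> U v.1 v.2 = T (sw v.1) v.2.
Proof. by move=> Hv; rewrite /U Omega_eq; case: ifP => //; lia. Qed.

Lemma dg_i : in_dg alpha i r.+1.
Proof. rewrite /in_dg; lia. Qed.

Lemma dg_i1 : in_dg alpha i.+1 r.+1.
Proof. rewrite /in_dg -Hal; lia. Qed.

Lemma maj_eq : maj1 alpha U r = maj1 alpha T r.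
Proof.
rewrite /maj1 big_mkcond [RHS]big_mkcond.
case: (@big_split3 _ 0 addn
  (fun j => if in_dg alpha j r.+1 && (U j r < U j r.+1) then (leg alpha j r.+1).+1 else 0)
  (fun j => if in_dg alpha j r.+1 && (T j r < T j r.+1) then (leg alpha j r.+1).+1 else 0)).
  by move=> j _ H1 H2; rewrite !U_out.
move=> P [E1 E2]; rewrite E1; rewrite E2 /=; rewrite dg_i dg_i1 !U_i ?U_i1 //; try lia.
by rewrite /leg -Hal; congr (P + _); rewrite addnC.
Qed.

Lemma U_L x y : count (fun v => chi3 x (U v.1 v.2) y != 1%R) (left_arm alpha i r.+1)
  = count (fun v => chi3 x (T v.1 v.2) y != 1%R) (left_arm alpha i r.+1).
Proof.
apply: eq_in_count => -[v1 v2] /left_mem /= [H2 H1].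
by rewrite U_out //; apply/negP => /eqP; lia.
Qed.

Lemma U_R x y : count (fun v => chi3 x (U v.1 v.2) y != 1%R) (right_arm alpha i.+1 r.+1)
  = count (fun v => chi3 x (T v.1 v.2) y != 1%R) (right_arm alpha i.+1 r.+1).
Proof.
apply: eq_in_count => -[v1 v2] /right_mem /= [H2 H1].
by rewrite U_out //; apply/negP => /eqP; lia.
Qed.

Lemma coinv_eq : exists C, 
  coinv1 alpha U r = C + (chi3 (T i.+1 r.+1) (T i r.+1) (T i.+1 r) != 1%R) /\
  coinv1 alpha T r = C + (chi3 (T i r.+1) (T i.+1 r.+1) (T i r) != 1%R).
Proof.
rewrite /coinv1.
case: (@big_split3 _ 0 addn
  (fun j => if in_dg alpha j r.+1 then count (fun v => chi3 (U j r.+1) (U v.1 v.2) (U j r) != 1%R) (Arm alpha j r.+1) else 0)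
  (fun j => if in_dg alpha j r.+1 then count (fun v => chi3 (T j r.+1) (T v.1 v.2) (T j r) != 1%R) (Arm alpha j r.+1) else 0)).
  move=> j _ H1 H2; rewrite !U_out //; case: ifP => // _.
  rewrite -[RHS](permP (arm_perm j r.+1 H1 H2)) count_map.
  by apply: eq_in_count => v /arm_mem [Hv _] /=; rewrite U_sw.
move=> P [E1 E2]; rewrite big_mkcond E1 big_mkcond E2 dg_i dg_i1 Arm_i ?dg_i1 // Arm_i1 !count_cat /=.
rewrite !U_i ?U_i1 //; try lia.
rewrite !U_L !U_R.
set A1 := count _ (left_arm _ _ _). set A2 := count _ (left_arm _ _ _).
set B1 := count _ (right_arm _ _ _). set B2 := count _ (right_arm _ _ _).
exists (P + A1 + A2 + B1 + B2); split; lia.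
Qed.

Definition Fj (j : nat) : Kqt :=
  ((1 - tv) / (1 - qv ^+ (1 + leg alpha j r.+1)%N * tv ^+ (1 + arm alpha j r.+1)%N))%R.

Lemma prod_eq : exists P : Kqt,
  (\prod_(j <- iota 1 (nn alpha) | in_dg alpha j r.+1 && (U j r.+1 != U j r)) Fj j =
    P * ((if T i.+1 r.+1 != T i.+1 r then Fj i else 1) * (if T i r.+1 != T i r then Fj i.+1 else 1)))%R /\
  (\prod_(j <- iota 1 (nn alpha) | in_dg alpha j r.+1 && (T j r.+1 != T j r)) Fj j =
    P * ((if T i r.+1 != T i r then Fj i else 1) * (if T i.+1 r.+1 != T i.+1 r then Fj i.+1 else 1)))%R.
Proof.
case: (@big_split3 _ 1%R *%R
  (fun j => if in_dg alpha j r.+1 && (U j r.+1 != U j r) then Fj j else 1%R)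
  (fun j => if in_dg alpha j r.+1 && (T j r.+1 != T j r) then Fj j else 1%R)).
  by move=> j _ H1 H2; rewrite !U_out.
move=> P [E1 E2]; exists P; rewrite big_mkcond E1 big_mkcond E2 dg_i dg_i1 !U_i ?U_i1 //; lia.
Qed.

Lemma main : non_attacking alpha T -> non_attacking alpha U ->
  (wt alpha U r * rho alpha i U r = wt alpha T r * rho alpha i T r)%R.
Proof.
move=> NT NU.
have adg_i x : x <= r.+1 -> in_adg alpha i x by move=> ?; rewrite /in_adg; lia.
have adg_i1 x : x <= r.+1 -> in_adg alpha i.+1 x by move=> ?; rewrite /in_adg -Hal; lia.
have ab : T i r != T i.+1 r.
  apply/eqP; apply: NT; rewrite ?adg_i ?adg_i1 //; rewrite /attack eqxx /=; lia.
have cd : T i r.+1 != T i.+1 r.+1.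
  apply/eqP; apply: NT; rewrite ?adg_i ?adg_i1 //; rewrite /attack eqxx /=; lia.
have ad : T i r != T i.+1 r.+1.
  apply/eqP => E; apply: (NT i.+1 r.+1 i r _ _ _ (esym E)); rewrite ?adg_i ?adg_i1 //.
  rewrite /attack /=; apply/orP; right; apply/orP; right; rewrite eqxx /=; lia.
have bc : T i.+1 r != T i r.+1.
  apply/eqP => E; apply: (NU i.+1 r.+1 i r); rewrite ?adg_i ?adg_i1 //.
    rewrite /attack /=; apply/orP; right; apply/orP; right; rewrite eqxx /=; lia.
  rewrite U_i ?U_i1; try lia; by rewrite E.
rewrite /wt maj_eq.
case: coinv_eq => C [-> ->]; case: prod_eq => P [-> ->].
rewrite !rhoE_rho U_i ?U_i1 ?U_i ?U_i1 //; try lia.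
rewrite !exprD; apply: rearr.
have := @key _ tv qv _ _ _ _ (arm alpha i.+1 r.+1) (leg alpha i.+1 r.+1) X_neq0 ab cd ad bc => /=.
have -> : Fj i = ((1 - tv) / (1 - qv ^+ (1 + leg alpha i.+1 r.+1) * tv ^+ (1 + (arm alpha i.+1 r.+1).+1)))%R.
  by rewrite /Fj arm_i ?dg_i1 // /leg Hal.
by [].
Qed.
End S.

Local Open Scope ring_scope.

Theorem lemma3p10 (alpha sigma : seq nat) (i : nat)
  (T : nat -> nat -> nat) (h : nat) :
  perm_eq sigma (iota 1 (size alpha)) ->
  (1 <= i)%N -> (i <= size alpha - 1)%N ->
  al alpha i = al alpha i.+1 ->
  NAF alpha sigma T ->
  (h <= al alpha i)%N ->
  non_attacking alpha (Omega i h T) ->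
  forall r : nat, (r < h)%N ->
    wt alpha (Omega i h T) r * rho alpha i (Omega i h T) r =
    wt alpha T r * rho alpha i T r.
Proof.
move=> _ Hi1 Hi Hal [_ NT] Hh NU r Hr.
have Hin : (i.+1 <= nn alpha)%N by rewrite /nn; lia.
exact (main alpha i Hi1 Hin Hal T h r Hh Hr NT NU).
Qed.
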